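(* Let $(E,\mathcal{L},g)$ be a uniform affine oriented matroid with $|E|>1$ such that every maximal element of $\mathcal{L}^{++}$ is a tope of $\mathcal{L}$ and $X\backslash g\ne0$ for all $X\in\mathcal{L}^+$. Let $X\in\mathcal{L}^{++}$. Then a tope $T$ of $\mathcal{L}$ with $T>X$ lies in $\mathcal{C}_X$ if and only if $T\backslash g$ is a tope in $\mathcal{D}_X$. Moreover the map $r:\mathcal{C}_X\to\mathcal{D}_X$, $r(T)=T\backslash g$, is a bijection, with inverse $h$ given by $h(T)_g=+$ and $h(T)_e=T_e$ for $e\neq g$.
   Context: An oriented matroid $(E,\mathcal{L})$ is given by covectors $\mathcal{L}\subseteq\{+,-,0\}^E$ satisfying the standard covector axioms, ordered componentwise by $0<+$, $0<-$; topes are maximal covectors. Uniform: the underlying matroid (flats $z(X)=\{e:X_e=0\}$) of rank $r$ has every $r$-subset of $E$ as a basis. Affine oriented matroid $(E,\mathcal{L},g)$: $g\in E$ a non-loop; $\mathcal{L}^+=\{X\in\mathcal{L}:X_g=+\}$; bounded complex $\mathcal{L}^{++}=\{X\in\mathcal{L}^+:\ \text{all } 0\neq Y\le X \text{ in } \mathcal{L} \text{ have } Y_g=+\}$. $X\backslash g$ is the restriction of $X$ to $E\setminus\{g\}$; contraction $\mathcal{L}/g=\{Y\backslash g: Y\in\mathcal{L}, Y_g=0\}$. For $X\in\mathcal{L}^{++}$: $\mathcal{C}_X$ is the set of topes $T$ of $\mathcal{L}$ with $T>X$ and $T\notin\mathcal{L}^{++}$; $\mathcal{D}_X$ is the set of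 topes $T$ of $\mathcal{L}/g$ with $T_e=X_e$ for all $e\in\operatorname{supp}(X)\setminus\{g\}$ (equivalently $T\ge X\backslash g$). *)

(* Defs.v *)
From mathcomp Require Import all_boot.
Set Implicit Arguments. Unset Strict Implicit. Unset Printing Implicit Defensive.

(* Signs: None = 0, Some true = +, Some false = - *)
Notation sign := (option bool).
Notation s0 := (@None bool).
Notation sP := (Some true).
Notation sM := (Some false).

Section OM.
Variable E : finType.

Definition svec := {ffun E -> sign}.

Definition szero : svec := [ffun _ => s0].
Definition sneg (X : svec) : svec := [ffun e => omap negb (X e)].
Definition scomp (X Y : svec) : svec :=
  [ffun e => if X e is Some b then Some b else Y e].
Definition ssep (X Y : svec) : {set E} :=
  [set e | (X e != s0) && (Y e == omap negb (X e))].
Definition sle (X Y : svec) : bool := [forall e, (X e == s0) || (X e == Y e)].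
Definition slt (X Y : svec) : bool := sle X Y && (X != Y).
Definition zset (X : svec) : {set E} := [set e | X e == s0].

Definition covector_axioms (L : {set svec}) : Prop :=
  [/\ szero \in L,
      (forall X, X \in L -> sneg X \in L),
      (forall X Y, X \in L -> Y \in L -> scomp X Y \in L) &
      (forall X Y e, X \in L -> Y \in L -> e \in ssep X Y ->
         exists2 Z, Z \in L & Z e = s0 /\
           (forall f, f \notin ssep X Y -> Z f = scomp X Y f))].

Definition tope (L : {set svec}) (T : svec) : Prop :=
  T \in L /\ (forall Y, Y \in L -> sle T Y -> Y = T).

(* underlying matroid: flats are z(X), closure = intersection of flats containing A *)
Definition om_closure (L : {set svec}) (A : {set E}) : {set E} :=
  \bigcap_(X in L | A \subset zset X) zset X.
Definition om_indep (L : {set svec}) (A : {set E}) : bool :=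
  [forall a in A, a \notin om_closure L (A :\ a)].
Definition om_basis (L : {set svec}) (B : {set E}) : Prop :=
  om_indep L B /\ (forall B' : {set E}, B \proper B' -> ~~ om_indep L B').
Definition om_uniform (L : {set svec}) : Prop :=
  exists r, r <= #|E| /\ (forall B : {set E}, #|B| = r -> om_basis L B).

Definition nonloop (L : {set svec}) (g : E) : Prop := exists2 X, X \in L & X g != s0.

Definition Lplus (L : {set svec}) (g : E) : {set svec} := [set X in L | X g == sP].
Definition Lpp (L : {set svec}) (g : E) : {set svec} :=
  [set X in Lplus L g | [forall Y in L, (Y != szero) ==> sle Y X ==> (Y g == sP)]].
Definition maximal_in (S : {set svec}) (X : svec) : Prop :=
  X \in S /\ (forall Y, Y \in S -> sle X Y -> Y = X).

End OM.

Definition Eg (E : finType) (g : E) := {x : E | x != g}.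

Section Del.
Variables (E : finType) (g : E).
Definition sdel (X : svec E) : svec (Eg g) := [ffun e => X (val e)].
Definition contr (L : {set svec E}) : {set svec (Eg g)} :=
  [set sdel Y | Y in L & Y g == s0].
Definition hext (T : svec (Eg g)) : svec E :=
  [ffun e => if insub e is Some e' then T e' else sP].

(* C_X and D_X, as predicates (tope is Prop-valued) *)
Definition CX (L : {set svec E}) (X : svec E) (T : svec E) : Prop :=
  [/\ tope L T, slt X T & T \notin Lpp L g].
Definition DX (L : {set svec E}) (X : svec E) (T : svec (Eg g)) : Prop :=
  tope (contr L) T /\
  (forall e : Eg g, X (val e) != s0 -> T e = X (val e)).
End Del.
Arguments sdel {E} g X.
Arguments contr {E} g L.
Arguments hext {E} g T.
Arguments CX {E} g L X T.
Arguments DX {E} g L X T.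

(* Main.v *)
Require Import Defs.
From mathcomp Require Import all_boot.
Set Implicit Arguments. Unset Strict Implicit. Unset Printing Implicit Defensive.

Lemma clP (E : finType) (L : {set svec E}) (A : {set E}) x :
  reflect (forall X, X \in L -> A \subset zset X -> X x = s0) (x \in om_closure L A).
Proof.
apply: (iffP bigcapP) => H X.
- move=> XL AX; have := H X; rewrite XL AX inE => /(_ isT) /eqP //.
- by move=> /andP[XL AX]; rewrite inE (H X XL AX).
Qed.

Lemma clPn (E : finType) (L : {set svec E}) (A : {set E}) x :
  reflect (exists X, [/\ X \in L, A \subset zset X & X x != s0]) (x \notin om_closure L A).
Proof.
apply: (iffP idP).
- move=> H.
  have : ~~ [forall X, ((X \in L) && (A \subset zset X)) ==> (X x == s0)].
    apply: contra H => /forallP H'; apply/clP => X XL AX.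
    by apply/eqP; exact: (implyP (H' X)) (introT andP (conj XL AX)).
  move/forallPn => [X]; rewrite negb_imply => /andP[/andP[XL AX] nz]; by exists X.
- move=> [X [XL AX nz]]; apply/negP => /clP H; by rewrite (H X XL AX) in nz.
Qed.

Lemma subset_card (T : finType) (A : {set T}) n : n <= #|A| ->
  exists2 B : {set T}, B \subset A & #|B| = n.
Proof.
elim: n => [|n IH] H; first by exists set0; rewrite ?sub0set ?cards0.
have [B BA cB] := IH (ltnW H).
have : B \proper A by rewrite properEcard BA cB.
case/properP => _ [x xA xB].
exists (x |: B); first by rewrite subUset sub1set xA BA.
by rewrite cardsU1 xB cB.
Qed.

Lemma superset_card (T : finType) (A : {set T}) n : #|A| + n <= #|T| ->
  exists2 B : {set T}, A \subset B & #|B| = #|A| + n.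
Proof.
elim: n => [|n IH] H; first by exists A; rewrite ?subxx ?addn0.
have [B AB cB] := IH (leq_trans (leq_add (leqnn _) (leqnSn n)) H).
have : B \proper setT by rewrite properEcard subsetT cardsT cB; rewrite addnS in H.
case/properP => _ [x _ xB].
exists (x |: B); first by rewrite (subset_trans AB) // subsetUr.
by rewrite cardsU1 xB cB addnS.
Qed.

Lemma sle_eq (E : finType) (X Y : svec E) e : sle X Y -> X e != s0 -> Y e = X e.
Proof. by move=> /forallP /(_ e) /orP[/eqP->|/eqP->]. Qed.

Lemma sle_comp (E : finType) (X Y : svec E) : sle X (scomp X Y).
Proof. apply/forallP => e; rewrite ffunE; case: (X e) => [b|]; by rewrite ?eqxx ?orbT. Qed.

Lemma sle_full (E : finType) (X Y : svec E) : (forall e, X e != s0) -> sle X Y -> Y = X.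
Proof. move=> H le; apply/ffunP => e; exact: sle_eq le (H e). Qed.

Lemma nz_ex (E : finType) (W : svec E) : W != szero E -> exists f, W f != s0.
Proof.
move=> H; apply/existsP; apply: contraR H => /existsPn H.
by apply/eqP/ffunP => e; rewrite ffunE; apply/eqP; move: (H e); rewrite negbK.
Qed.

Lemma sign_pick (E : finType) (L : {set svec E}) V x s :
  covector_axioms L -> V \in L -> V x != s0 -> s != s0 ->
  exists V', [/\ V' \in L, V' x = s & forall y, (V' y == s0) = (V y == s0)].
Proof.
case=> _ Hneg _ _ VL Vx s0.
case: (boolP (V x == s)) => [/eqP Vs|Vs].
  by exists V.
exists (sneg V); split; first exact: Hneg.
- rewrite ffunE; move: Vs Vx s0; case: (V x) => [[]|] //; case: s => [[]|] //.
- by move=> y; rewrite ffunE; case: (V y).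
Qed.

Lemma zero_card (E : finType) (L : {set svec E}) r :
  covector_axioms L -> (forall B : {set E}, #|B| = r -> om_basis L B) ->
  forall W, W \in L -> W != szero E -> #|zset W| < r.
Proof.
move=> cov Hr W WL Wnz; rewrite ltnNge; apply/negP => Hge.
have [B BW cB] := subset_card Hge.
have [f Wf] := nz_ex Wnz.
have fB : f \notin B by apply: contra Wf => fB; have := subsetP BW f fB; rewrite inE.
have [indB maxB] := Hr B cB.
have := maxB (f |: B); rewrite properEcard subsetUr cardsU1 fB add1n ltnSn => /(_ isT).
case/forall_inPn => a aB /negPn acl.
case: (eqVneq a f) => [eaf|naf].
  subst a; move: acl; rewrite setU1K // => /clP /(_ W WL BW) Wf0.
  by rewrite Wf0 in Wf.
have aB' : a \in B by move: aB; rewrite in_setU1 (negbTE naf).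
have := forall_inP indB a aB'; case/clPn => V [VL BaV Va].
have aclP := clP _ _ _ acl.
have HBa : forall y, y \in (f |: B) :\ a -> y = f \/ y \in B :\ a.
  move=> y; rewrite !inE => /andP[ya /orP[yf|yB]]; [left; exact/eqP | right; by rewrite ya].
case: (eqVneq (V f) s0) => Vf.
  have : V a = s0.
    apply: aclP VL _; apply/subsetP => y /HBa [->|yBa]; first by rewrite inE Vf.
    exact: subsetP BaV y yBa.
  by move/eqP; rewrite (negbTE Va).
have nWf : omap negb (W f) != s0 by move: Wf; case: (W f).
have [V' [V'L V'f V'z]] := sign_pick cov VL Vf nWf.
have fsep : f \in ssep W V' by rewrite inE Wf V'f eqxx.
case: cov => _ _ _ Hel.
have [Z ZL [Zf Zo]] := Hel W V' f WL V'L fsep.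
have Wz : forall y, y \in B -> W y = s0 by move=> y yB; have := subsetP BW y yB; rewrite inE => /eqP.
have nsep : forall y, y \in B -> y \notin ssep W V' by move=> y yB; rewrite inE Wz // eqxx.
have : Z a = s0.
  apply: aclP ZL _; apply/subsetP => y /HBa [->|yBa]; first by rewrite inE Zf.
  have yB : y \in B by move: yBa; rewrite inE => /andP[].
  rewrite inE Zo ?nsep // ffunE Wz //; apply/eqP.
  apply/eqP; rewrite V'z; have := subsetP BaV y yBa; by rewrite inE.
rewrite Zo ?nsep // ffunE Wz // => /eqP; rewrite V'z (negbTE Va) //.
Qed.

Lemma ext_lem (E : finType) (L : {set svec E}) r :
  covector_axioms L -> r <= #|E| -> (forall B : {set E}, #|B| = r -> om_basis L B) ->
  forall W e, W \in L -> W != szero E -> W e = s0 ->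
  exists V, [/\ V \in L, V e != s0 & forall x, W x = s0 -> x != e -> V x = s0].
Proof.
move=> cov rE Hr W e WL Wnz We.
have zc := zero_card cov Hr WL Wnz.
have hh : #|zset W| + (r - #|zset W|) <= #|E| by rewrite subnKC // ltnW.
have [B WB cB] := superset_card hh.
rewrite subnKC in cB; last exact: ltnW.
have [indB _] := Hr B cB.
have eB : e \in B by apply: (subsetP WB); rewrite inE We.
have := forall_inP indB e eB; case/clPn => V [VL BV Ve].
exists V; split => // x Wx xe.
have : x \in B :\ e by rewrite !inE xe (subsetP WB) // inE Wx.
by move/(subsetP BV); rewrite inE => /eqP.
Qed.

Lemma noloop (E : finType) (L : {set svec E}) r g :
  covector_axioms L -> r <= #|E| -> (forall B : {set E}, #|B| = r -> om_basis L B) ->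
  nonloop L g -> forall e, exists2 V, V \in L & V e != s0.
Proof.
move=> cov rE Hr [X0 X0L X0g] e.
case: (eqVneq (X0 e) s0) => X0e; last by exists X0.
have X0nz : X0 != szero E by apply: contra X0g => /eqP ->; rewrite ffunE.
have [V [VL Ve _]] := ext_lem cov rE Hr X0L X0nz X0e.
by exists V.
Qed.

Lemma tope_full (E : finType) (L : {set svec E}) :
  covector_axioms L -> (forall e, exists2 V, V \in L & V e != s0) ->
  forall T, tope L T -> forall e, T e != s0.
Proof.
move=> [_ _ Hc _] nl T [TL Tmax] e; apply/negP => /eqP Te.
have [V VL Ve] := nl e.
have H := Tmax _ (Hc _ _ TL VL) (sle_comp T V).
have : scomp T V e = T e by rewrite H.
rewrite /scomp ffunE Te => Ve'; by rewrite Ve' in Ve.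
Qed.

Lemma grow (E : finType) (L : {set svec E}) r (g : E) :
  covector_axioms L -> r <= #|E| -> (forall B : {set E}, #|B| = r -> om_basis L B) ->
  forall T : svec E, (forall e, T e != s0) ->
  forall n (W : svec E), W \in L -> W != szero E -> sle W T -> W g = s0 -> #|zset W| <= n ->
  exists W', [/\ W' \in L, sle W' T, W' g = s0 & forall x, x != g -> W' x != s0].
Proof.
move=> cov rE Hr T Tf; elim=> [|n IH] W WL Wnz WT Wg cW.
  by move: cW; rewrite leqn0 => /eqP/cards0_eq/setP/(_ g); rewrite !inE Wg.
case: (boolP [exists x, (x != g) && (W x == s0)]); last first.
  move/existsPn => H; exists W; split => // x xg; move: (H x); by rewrite xg.
case/existsP => e /andP[eg /eqP We].
have [V [VL Ve Vz]] := ext_lem cov rE Hr WL Wnz We.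
have [V' [V'L V'e V'z]] := sign_pick cov VL Ve (Tf e).
have covc := cov; case: covc => _ _ Hc _.
have [f Wf] := nz_ex Wnz.
apply: (IH (scomp W V')).
- exact: Hc.
- apply: contra Wf => /eqP/ffunP/(_ f); rewrite !ffunE; case: (W f) => //.
- apply/forallP => x; rewrite ffunE.
  case Wx: (W x) => [b|].
    by rewrite -Wx (sle_eq WT) ?Wx // eqxx orbT.
  case: (eqVneq x e) => [->|xe]; first by rewrite V'e eqxx orbT.
  by rewrite V'z Vz ?eqxx.
- by rewrite ffunE Wg; apply/eqP; rewrite V'z Vz // eq_sym.
- have S : zset (scomp W V') \subset zset W :\ e.
    apply/subsetP => x; rewrite !inE ffunE.
    case: (W x) => //= Vx; apply/andP; split => //.
    by apply/negP => /eqP xe; subst x; rewrite V'e in Vx; have := Tf e; rewrite Vx.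
  apply: leq_trans (subset_leq_card S) _.
  by move: cW; rewrite (cardsD1 e) inE We.
Qed.

Lemma notLpp (E : finType) (L : {set svec E}) (g : E) T Y :
  Y \in L -> Y != szero E -> sle Y T -> Y g = s0 -> T \notin Lpp L g.
Proof.
move=> YL Ynz YT Yg; rewrite inE; apply/negP => /andP[_ /forall_inP H].
by have := H Y YL; rewrite Ynz YT Yg.
Qed.

Lemma sdel_nz (E : finType) (g : E) (T : svec (Eg g)) :
  T != szero (Eg g) -> exists e, T e != s0.
Proof. exact: nz_ex. Qed.

Theorem lemma4p4 (E : finType) (L : {set svec E}) (g : E) :
  covector_axioms L -> om_uniform L -> nonloop L g -> 1 < #|E| ->
  (forall X, maximal_in (Lpp L g) X -> tope L X) ->
  (forall X, X \in Lplus L g -> sdel g X != szero (Eg g)) ->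
  forall X, X \in Lpp L g ->
  [/\ (forall T, tope L T -> slt X T -> (CX g L X T <-> DX g L X (sdel g T))),
      (forall T, CX g L X T -> DX g L X (sdel g T)),
      (forall T, DX g L X T -> CX g L X (hext g T)),
      (forall T, CX g L X T -> hext g (sdel g T) = T) &
      (forall T, DX g L X T -> sdel g (hext g T) = T)].
Proof.
move=> cov [r [rE Hr]] nlg _ _ Hsd X XLpp.
have nl := noloop cov rE Hr nlg.
have covc := cov; case: covc => _ _ Hc _.
have XLp : X \in Lplus L g by move: XLpp; rewrite inE => /andP[].
have Xg : X g = sP by move: XLp; rewrite inE => /andP[_ /eqP].
have XL : X \in L by move: XLp; rewrite inE => /andP[].
have Tg : forall T, slt X T -> T g = sP.
  by move=> T /andP[XT _]; rewrite (sle_eq XT) ?Xg.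
have agree : forall T, slt X T -> forall e : Eg g, X (val e) != s0 -> sdel g T e = X (val e).
  by move=> T /andP[XT _] e Xe; rewrite ffunE (sle_eq XT).
have part1 : forall T, tope L T -> slt X T -> (CX g L X T <-> DX g L X (sdel g T)).
  move=> T Ttop XT; have Tfull := tope_full cov nl Ttop.
  split.
  - case=> _ _ nLpp.
    have : exists Y, [/\ Y \in L, Y != szero E, sle Y T & Y g = s0].
      move: nLpp; rewrite inE negb_and; case/orP.
        by rewrite inE (proj1 Ttop) (Tg T XT) eqxx.
      case/forall_inPn => Y YL; rewrite negb_imply => /andP[Ynz]; rewrite negb_imply => /andP[YT Yg].
      exists Y; split => //.
      by move: Yg (sle_eq YT (e := g)); rewrite (Tg T XT); case: (Y g) => [[]|] // _ /(_ isT).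
    case=> Y [YL Ynz YT Yg].
    have [W [WL WT Wg Wf]] := grow cov rE Hr Tfull (n := #|zset Y|) YL Ynz YT Yg (leqnn _).
    have eqW : sdel g W = sdel g T.
      by apply/ffunP => e; rewrite !ffunE (sle_eq WT) // Wf // (valP e).
    split; last exact: agree.
    split.
      by rewrite -eqW; apply/imsetP; exists W => //; rewrite inE WL Wg eqxx.
    move=> Y' _ le; apply: sle_full le => e; rewrite ffunE; exact: Tfull.
  - case=> [[Tc _] _]; split => //.
    case/imsetP: Tc => Y; rewrite inE => /andP[YL /eqP Yg] eqY.
    have Ynz : Y != szero E.
      have TLp : T \in Lplus L g by rewrite inE (proj1 Ttop) (Tg T XT).
      apply: contra (Hsd T TLp) => /eqP YZ.
      by rewrite eqY YZ; apply/eqP/ffunP => e; rewrite !ffunE.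
    apply: (notLpp YL Ynz _ Yg); apply/forallP => x.
    case: (eqVneq x g) => [->|xg]; first by rewrite Yg eqxx.
    have := congr1 (fun F : svec (Eg g) => F (Sub x xg)) eqY; rewrite !ffunE /= => ->.
    by rewrite eqxx orbT.
split.
- exact: part1.
- by move=> T [Ttop XT nL]; apply/(part1 T Ttop XT).
- move=> T [[Tc Tmax] TX].
  case/imsetP: (Tc) => Y; rewrite inE => /andP[YL /eqP Yg] eqY.
  have [e0 Xe0] := nz_ex (Hsd X XLp).
  have Tnz : T != szero (Eg g).
    apply/eqP => TZ; move: (TX e0); rewrite ffunE in Xe0 => /(_ Xe0).
    by rewrite TZ ffunE => H; rewrite -H in Xe0.
  have Ynz : Y != szero E.
    apply: contra Tnz => /eqP YZ; rewrite eqY YZ; apply/eqP/ffunP => e; by rewrite !ffunE.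
  have TY : forall e : Eg g, T e = Y (val e) by move=> e; rewrite eqY ffunE.
  have Tfull : forall e, T e != s0.
    move=> e; apply/negP => /eqP Te.
    have Ye : Y (val e) = s0 by rewrite -TY.
    have [V [VL Ve Vz]] := ext_lem cov rE Hr YL Ynz Ye.
    have Vg : V g = s0 by apply: Vz => //; rewrite eq_sym (valP e).
    have YVc : sdel g (scomp Y V) \in contr g L.
      by apply/imsetP; exists (scomp Y V) => //; rewrite inE Hc // ffunE Yg Vg eqxx.
    have le : sle T (sdel g (scomp Y V)).
      apply/forallP => x; rewrite !ffunE TY; case: (Y (val x)) => [b|]; by rewrite ?eqxx ?orbT.
    have := Tmax _ YVc le => /ffunP /(_ e); rewrite !ffunE Ye Te => H.
    by rewrite H in Ve.
  have hg : hext g T g = sP by rewrite ffunE insubF // eqxx.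
  have hv : forall x (xg : x != g), hext g T x = T (Sub x xg).
    by move=> x xg; rewrite ffunE insubT.
  have hXY : hext g T = scomp X Y.
    apply/ffunP => x; rewrite [RHS]ffunE.
    case: (eqVneq x g) => [->|xg]; first by rewrite hg Xg.
    rewrite hv TY SubK.
    case Xx: (X x) => [b|] //.
    have := TX (Sub x xg); rewrite SubK Xx => /(_ isT); by rewrite TY SubK.
  have hfull : forall x, hext g T x != s0.
    move=> x; case: (eqVneq x g) => [->|xg]; first by rewrite hg.
    by rewrite hv.
  have YH : sle Y (hext g T).
    apply/forallP => x; case: (eqVneq x g) => [->|xg]; first by rewrite Yg eqxx.
    by rewrite hv TY SubK eqxx orbT.
  split.
  + split; first by rewrite hXY Hc.
    by move=> Z ZL le; apply: sle_full le.
  + rewrite /slt hXY sle_comp /=; apply/eqP => XH.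
    move: XLpp; rewrite -hXY in XH; rewrite XH => HL.
    by move: (notLpp YL Ynz YH Yg); rewrite HL.
  + exact: notLpp YL Ynz YH Yg.
- move=> T [_ XT _]; apply/ffunP => x; rewrite ffunE.
  case: (eqVneq x g) => [->|xg].
    by rewrite insubF ?eqxx // (Tg T XT).
  by rewrite insubT ffunE SubK.
- move=> T _; apply/ffunP => e; rewrite !ffunE valK //.
Qed.
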